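(* Let $N \geq 12$ and $1 \le \Delta \leq \frac{N}{2}$ be integers. Then $f(N,\Delta) \leq \frac{N^2}{3}$.
   Context: All graphs are finite and simple; $L(G)$ is the line graph of $G$; $e(\cdot)$, $\Delta(\cdot)$, $\delta(\cdot)$ denote number of edges, maximum degree and minimum degree. For integers $N \ge \Delta \ge 1$, $f(N,\Delta) = \max\{ e(L(G)) : e(G)=N, \Delta(G)=\Delta, \delta(G)\geq 1\}$, the maximum over all simple graphs $G$. *)

(* Defs.v *)
From mathcomp Require Import all_boot.
Set Implicit Arguments. Unset Strict Implicit. Unset Printing Implicit Defensive.

Definition simple_graph (V : finType) (adj : rel V) : Prop :=
  symmetric adj /\ irreflexive adj.

Definition edges (V : finType) (adj : rel V) : {set {set V}} :=
  [set e : {set V} | [exists x, exists y, adj x y && (e == [set x; y])]].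

Definition num_edges (V : finType) (adj : rel V) : nat := #|edges adj|.

Definition deg (V : finType) (adj : rel V) (x : V) : nat := #|[set y | adj x y]|.

Definition max_deg (V : finType) (adj : rel V) : nat := \max_(x : V) deg adj x.

Definition no_isolated (V : finType) (adj : rel V) : Prop :=
  forall x : V, 0 < deg adj x.

Definition line_edges (V : finType) (adj : rel V) : {set {set {set V}}} :=
  [set P : {set {set V}} | [exists e1 in edges adj, exists e2 in edges adj,
     [&& e1 != e2, e1 :&: e2 != set0 & P == [set e1; e2]]]].

Definition num_line_edges (V : finType) (adj : rel V) : nat := #|line_edges adj|.

(* Main.v *)
Require Import Defs.
From mathcomp Require Import all_boot zify.
Set Implicit Arguments. Unset Strict Implicit.

Section G.
Variables (V : finType) (adj : rel V).
Hypothesis (Hsym : symmetric adj) (Hirr : irreflexive adj).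

Definition Nb (x : V) : {set V} := [set y | adj x y].
Definition Ex (x : V) : {set {set V}} := [set e in edges adj | x \in e].

Lemma edgesP e : reflect (exists x y, adj x y /\ e = [set x; y]) (e \in edges adj).
Proof.
rewrite /edges inE; apply: (iffP existsP) => [[x /existsP [y /andP [h /eqP ->]]]|[x [y [h ->]]]].
  by exists x, y.
by exists x; apply/existsP; exists y; rewrite h eqxx.
Qed.

Lemma set2_inj (x y z : V) : x != y -> [set x; y] = [set x; z] -> y = z.
Proof.
move=> nxy E; have : y \in [set x; z] by rewrite -E !inE eqxx orbT.
by case/set2P => // eyx; rewrite eyx eqxx in nxy.
Qed.

Lemma ExE x : Ex x = [set [set x; y] | y in Nb x].
Proof.
apply/setP => e; apply/idP/idP.
  rewrite inE => /andP [/edgesP [a [b [hab ->]]] /set2P [->|->]].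
    by apply/imsetP; exists b => //; rewrite inE.
  by apply/imsetP; exists a; [rewrite inE Hsym | rewrite setUC].
case/imsetP => y; rewrite inE => hy ->; rewrite inE; apply/andP; split.
  by apply/edgesP; exists x, y.
by rewrite !inE eqxx.
Qed.

Lemma card_Ex x : #|Ex x| = deg adj x.
Proof.
rewrite ExE card_in_imset //.
move=> y z; rewrite !inE => hy _; apply: set2_inj.
by apply/eqP => exy; rewrite -exy Hirr in hy.
Qed.

Lemma ExI x y : x != y -> Ex x :&: Ex y \subset [set [set x; y]].
Proof.
move=> nxy; apply/subsetP => e; rewrite inE ExE => /andP [/imsetP [a _ ->]].
rewrite inE => /andP [_ hy]; rewrite inE.
case/set2P: hy => [eyx|->]; last by [].
by rewrite eyx eqxx in nxy.
Qed.

Lemma Ex_sub x : Ex x \subset edges adj.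
Proof. by apply/subsetP => e; rewrite inE => /andP []. Qed.

Lemma cardI_le1 x y : x != y -> #|Ex x :&: Ex y| <= 1.
Proof. by move=> nxy; rewrite -(cards1 [set x; y]); apply: subset_leq_card; apply: ExI. Qed.

Lemma triple x y z : x != y -> x != z -> y != z ->
  deg adj x + deg adj y + deg adj z <= num_edges adj + 3.
Proof.
move=> nxy nxz nyz; rewrite -!card_Ex.
have hU : #|Ex x :|: Ex y :|: Ex z| <= num_edges adj.
  by apply: subset_leq_card; rewrite !subUset !Ex_sub.
have h1 := cardI_le1 nxy; have h2 := cardI_le1 nxz; have h3 := cardI_le1 nyz.
have h4 : #|(Ex x :|: Ex y) :&: Ex z| <= #|Ex x :&: Ex z| + #|Ex y :&: Ex z|.
  by rewrite setIUl; apply: leq_card_setU.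
have e1 := cardsU (Ex x :|: Ex y) (Ex z).
have e2 := cardsU (Ex x) (Ex y).
have l1 := subset_leq_card (subsetIl (Ex x :|: Ex y) (Ex z)).
have l2 := subset_leq_card (subsetIl (Ex x) (Ex y)).
have l3 := subset_leq_card (subsetUl (Ex x) (Ex y)).
lia.
Qed.

Lemma handshake : \sum_x deg adj x <= 2 * num_edges adj.
Proof.
have -> : \sum_x deg adj x = \sum_x \sum_(e in edges adj) (x \in e : nat).
  apply: eq_bigr => x _; rewrite -card_Ex -sum1_card big_mkcond /= [RHS]big_mkcond /=.
  by apply: eq_bigr => e _; rewrite inE; case: (e \in edges adj); case: (x \in e).
rewrite exchange_big /= /num_edges -sum1_card big_distrr /=.
apply: leq_sum => e /edgesP [a [b [_ ->]]].
rewrite (eq_bigr (fun x => if x \in [set a; b] then 1 else 0)); last by move=> i _; case: (i \in _).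
by rewrite -big_mkcond sum1_card cards2 muln1; case: (a != b).
Qed.

Definition Dp : {set V * {set V}} := [set p : V * {set V} | (p.2 \subset Nb p.1) && (#|p.2| == 2)].
Definition fp (p : V * {set V}) : {set {set V}} := [set [set p.1; y] | y in p.2].

Lemma card_Dp : #|Dp| = \sum_x 'C(deg adj x, 2).
Proof.
rewrite -sum1_card.
have -> : \sum_(p in Dp) 1 = \sum_(p : V * {set V} | predT p.1 && ((p.2 \subset Nb p.1) && (#|p.2| == 2))) 1.
  by apply: eq_bigl => p; rewrite inE.
rewrite -(pair_big_dep predT (fun (x : V) (B : {set V}) => (B \subset Nb x) && (#|B| == 2)) (fun _ _ => 1)) /=.
apply: eq_bigr => x _; rewrite sum1_card.
rewrite -(cards_draws (Nb x) 2); apply: eq_card => B; by rewrite inE.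
Qed.

Lemma line_sub : line_edges adj \subset fp @: Dp.
Proof.
apply/subsetP => P; rewrite inE => /existsP [e1 /andP [He1 /existsP [e2 /andP [He2 /and3P [ne nI /eqP ->]]]]].
case/set0Pn: nI => x; rewrite inE => /andP [x1 x2].
have : e1 \in Ex x by rewrite inE He1.
rewrite ExE => /imsetP [y hy E1].
have : e2 \in Ex x by rewrite inE He2.
rewrite ExE => /imsetP [z hz E2].
apply/imsetP; exists (x, [set y; z]).
  rewrite inE /=; apply/andP; split.
    by apply/subsetP => w /set2P [->|->].
  have nyz : y != z by apply/eqP => eyz; rewrite E1 E2 eyz eqxx in ne.
  by rewrite cards2 nyz.
by rewrite /fp /= imsetU1 imset_set1 E1 E2.
Qed.

Lemma line_bound : num_line_edges adj <= \sum_x 'C(deg adj x, 2).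
Proof.
rewrite -card_Dp /num_line_edges.
apply: leq_trans (subset_leq_card line_sub) (leq_imset_card _ _).
Qed.
End G.

Lemma arith (N a b m : nat) : 2 * a <= N -> b <= a -> m <= b -> m + a + b <= N + 3 ->
  3 * (a * a.-1 + b * b.-1 + m.-1 * (2 * N - a - b)) <= 2 * N ^ 2.
Proof.
case: m => [|m] /=.
  move=> *; nia.
move=> *; nia.
Qed.

Lemma bin2_le n : 2 * 'C(n, 2) <= n * n.-1.
Proof. rewrite bin2; have := odd_double_half (n * n.-1); rewrite -mul2n; lia. Qed.

Theorem mainTheorem15 (N Delta : nat) :
  12 <= N -> 1 <= Delta -> 2 * Delta <= N ->
  forall (V : finType) (adj : rel V),
    simple_graph adj ->
    num_edges adj = N -> max_deg adj = Delta -> no_isolated adj ->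
    3 * num_line_edges adj <= N ^ 2.
Proof.
move=> HN HD1 HD2 V adj [Hsym Hirr] HE HDelta Hiso.
have [e0 He0] : exists e, e \in edges adj.
  apply/set0Pn; rewrite -card_gt0; rewrite /num_edges in HE; rewrite HE; lia.
case/(edgesP adj): He0 => x0 [_ [_ _]].
have [u _ Hu] := @arg_maxnP V x0 predT (deg adj) isT.
have Ha : deg adj u = Delta.
  rewrite -HDelta /max_deg; apply/eqP; rewrite eqn_leq; apply/andP; split; first exact: leq_bigmax.
  by apply/bigmax_leqP => i _; apply: Hu.
have [y0 Hy0] : exists y, y \in [set y | adj u y].
  by apply/set0Pn; rewrite -card_gt0; apply: Hiso.
have Hy0u : y0 != u by apply/eqP => e; rewrite inE e Hirr in Hy0.
have [v Hvu Hv] := @arg_maxnP V y0 (fun y => y != u) (deg adj) Hy0u.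
have Hba : deg adj v <= deg adj u by apply: Hu.
set m := \max_(w | (w != u) && (w != v)) deg adj w.
have Hmb : m <= deg adj v.
  by apply/bigmax_leqP => w /andP [wu _]; apply: Hv.
have Hm3 : m <= N + 3 - deg adj u - deg adj v.
  apply/bigmax_leqP => w /andP [wu wv].
  have := triple Hsym Hirr (x:=u) (y:=v) (z:=w).
  rewrite HE eq_sym Hvu eq_sym wu eq_sym wv; move=> /(_ isT isT isT); lia.
have Hhs := handshake Hsym Hirr.
rewrite (bigD1 u) //= (bigD1 v) //= in Hhs.
set R := \sum_(i | (true && (i != u)) && (i != v)) deg adj i in Hhs.
have HL := line_bound Hsym.
have HC : 2 * \sum_x 'C(deg adj x, 2) <= \sum_x deg adj x * (deg adj x).-1.
  by rewrite big_distrr; apply: leq_sum => x _; apply: bin2_le.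
rewrite [X in _ <= X](bigD1 u) //= [X in _ <= _ + X](bigD1 v) //= in HC.
have HR : \sum_(i | (true && (i != u)) && (i != v)) deg adj i * (deg adj i).-1 <= m.-1 * R.
  rewrite /R big_distrr; apply: leq_sum => w /andP [/andP [_ wu] wv].
  rewrite mulnC; apply: leq_mul => //.
  have : deg adj w <= m.
    by apply: (leq_bigmax_cond (P := fun w => (w != u) && (w != v))); rewrite wu wv.
  lia.
have HRb : m.-1 * R <= m.-1 * (2 * N - deg adj u - deg adj v).
  by apply: leq_mul => //; lia.
have HA := @arith N (deg adj u) (deg adj v) m.
rewrite Ha in HA HRb HC Hhs Hm3 Hba.
have HA' := HA ltac:(lia) Hba Hmb ltac:(lia).
rewrite HE in Hhs HL.
have HR' : \sum_(i | (i != u) && (i != v)) deg adj i * (deg adj i).-1 <= m.-1 * R := HR.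
lia.
Qed.
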